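(* Every satisfiable set $\Phi\subseteq\mathrm{FO}\cup\sim\mathrm{FO}$ is satisfied (in first-order team semantics) by a team of cardinality $|\Phi\cap\sim\mathrm{FO}|$. In particular the team can always be chosen countable.
   Context: First-order team semantics: $(\mathcal{A},T)\models\alpha$ for $\alpha\in\mathrm{FO}$ iff $(\mathcal{A},s)\models\alpha$ for all $s\in T$; $(\mathcal{A},T)\models\sim\varphi$ iff $(\mathcal{A},T)\not\models\varphi$; $\sim\mathrm{FO}=\{\sim\alpha\mid\alpha\in\mathrm{FO}\}$ is a fragment of the Boolean closure $\mathcal{B}(\mathrm{FO})$ (closure under $\sim$ and material implication). This generalizes the empty team property (every $\Phi\subseteq\mathrm{FO}$ is satisfied by the empty team). *)

(* Defs.v *)
From Stdlib Require Import Vectors.Fin.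

Set Implicit Arguments.

Record signature := Signature {
  funsym : Type;
  relsym : Type;
  fun_arity : funsym -> nat;
  rel_arity : relsym -> nat
}.

Section FO.
Variable S : signature.

Inductive term : Type :=
  | Var : nat -> term
  | App : forall f : funsym S, (Fin.t (fun_arity S f) -> term) -> term.

Inductive fo : Type :=
  | FEq  : term -> term -> fo
  | FRel : forall r : relsym S, (Fin.t (rel_arity S r) -> term) -> fo
  | FBot : fo
  | FNot : fo -> fo
  | FAnd : fo -> fo -> fo
  | FOr  : fo -> fo -> fo
  | FEx  : nat -> fo -> fo
  | FAll : nat -> fo -> fo.

Record structure := Structure {
  dom : Type;
  dom_inhabited : inhabited dom;
  fun_interp : forall f : funsym S, (Fin.t (fun_arity S f) -> dom) -> dom;
  rel_interp : forall r : relsym S, (Fin.t (rel_arity S r) -> dom) -> Prop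
}.

Definition assignment (A : structure) := nat -> dom A.

Definition update (A : structure) (s : assignment A) (x : nat) (a : dom A)
  : assignment A := fun y => if PeanoNat.Nat.eqb y x then a else s y.

Fixpoint eval_term (A : structure) (s : assignment A) (t : term) : dom A :=
  match t with
  | Var x => s x
  | App f args => fun_interp A f (fun i => eval_term s (args i))
  end.

Fixpoint sat (A : structure) (s : assignment A) (a : fo) : Prop :=
  match a with
  | FEq t1 t2 => eval_term s t1 = eval_term s t2
  | FRel r args => rel_interp A r (fun i => eval_term s (args i))
  | FBot => False
  | FNot b => ~ sat s b
  | FAnd b c => sat s b /\ sat s c
  | FOr b c => sat s b \/ sat s c
  | FEx x b => exists d : dom A, sat (update s x d) b
  | FAll x b => forall d : dom A, sat (update s x d) b
  end.

Definition team (A : structure) := assignment A -> Prop.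

(* Formulas of the Boolean closure B(FO): closure of FO under the
   contradictory negation ~ and material implication. *)
Inductive bform : Type :=
  | BFO  : fo -> bform
  | BSim : bform -> bform
  | BImp : bform -> bform -> bform.

Fixpoint team_sat (A : structure) (T : team A) (p : bform) : Prop :=
  match p with
  | BFO a => forall s, T s -> sat s a
  | BSim q => ~ team_sat T q
  | BImp q r => team_sat T q -> team_sat T r
  end.

Definition in_FO_simFO (Phi : bform -> Prop) : Prop :=
  forall p, Phi p -> (exists a, p = BFO a) \/ (exists a, p = BSim (BFO a)).

Definition team_sat_set (A : structure) (T : team A) (Phi : bform -> Prop) :=
  forall p, Phi p -> team_sat T p.

Definition satisfiable (Phi : bform -> Prop) : Prop :=
  exists (A : structure) (T : team A), team_sat_set T Phi.

End FO.

(* Main.v *)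
Require Import Defs.
From Stdlib Require Import Classical ClassicalEpsilon ProofIrrelevance.

Theorem mainTheorem6 (S : signature) (Phi : bform S -> Prop) :
  in_FO_simFO Phi ->
  satisfiable Phi ->
  exists (A : structure S) (T : team A),
    team_sat_set T Phi /\
    (* |T| <= |Phi ∩ ~FO| : an injection from T into Phi ∩ ~FO *)
    exists f : {s : assignment A | T s} -> fo S,
      (forall x, Phi (BSim (BFO (f x)))) /\
      (forall x y, f x = f y -> x = y).
Proof.
  intros HPhi [A [T HT]].
  assert (inh : inhabited (assignment A)).
  { destruct (dom_inhabited A) as [d]. exact (inhabits (fun _ => d)). }
  assert (inhf : inhabited (fo S)) by exact (inhabits (FBot S)).
  set (pick := fun a => epsilon inh (fun s => T s /\ ~ sat s a)).
  assert (Hpick : forall a, Phi (BSim (BFO a)) -> T (pick a) /\ ~ sat (pick a) a).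
  { intros a Ha. apply (epsilon_spec inh (fun s => T s /\ ~ sat s a)).
    specialize (HT _ Ha). simpl in HT.
    apply NNPP; intro Hn. apply HT. intros s Hs.
    apply NNPP; intro Hs'. apply Hn. exists s; auto. }
  set (T' := fun s => exists a, Phi (BSim (BFO a)) /\ s = pick a).
  exists A, T'. split.
  - intros p Hp. destruct (HPhi p Hp) as [[a ->]|[a ->]]; simpl.
    + intros s [b [Hb ->]]. exact (HT _ Hp _ (proj1 (Hpick b Hb))).
    + intro H. apply (proj2 (Hpick a Hp)). apply H. exists a; auto.
  - exists (fun x => epsilon inhf (fun a => Phi (BSim (BFO a)) /\ proj1_sig x = pick a)).
    assert (Hf : forall x : {s | T' s},
      Phi (BSim (BFO (epsilon inhf (fun a => Phi (BSim (BFO a)) /\ proj1_sig x = pick a))))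
      /\ proj1_sig x = pick (epsilon inhf (fun a => Phi (BSim (BFO a)) /\ proj1_sig x = pick a))).
    { intros [s Hs]. apply (epsilon_spec inhf). exact Hs. }
    split.
    + intro x. exact (proj1 (Hf x)).
    + intros x y Hxy. destruct (Hf x) as [_ Ex]. destruct (Hf y) as [_ Ey].
      destruct x as [s Hs], y as [t Ht]. simpl in *.
      assert (s = t) by (rewrite Ex, Ey, Hxy; reflexivity). subst t.
      f_equal. apply proof_irrelevance.
Qed.
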